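(* Let $n,r,s,t\in\mathbb N$, let $G_{n,r,s,t}=(V,E,c)$ be the graph described in the context, and let $F\subseteq E$ be functional. Then: (i) Let $i\in[n]$ and $j\in[rs]$. If $b^1_{i,j}\notin F$, $b^1_{i,j'}\in F$ for all $j'>j$, $i\ge reset(F)$, and $B$ is a tree with $B\subseteq\mathcal B_F$, then $b^1_{i,j}$ is an improving switch with respect to $B$. (ii) Let $i\in[n]$, $j\in[r]$, $k\in[s]$. If $a^1_{i,j,k}\notin F$, $a^1_{i,j,k'}\in F$ for all $k'>k$, $i\ge reset(F)$, ${\bf b}^1_i\subseteq F$, and $B$ is a tree with $B\subseteq\mathcal B_F$, then $a^1_{i,j,k}$ is an improving switch with respect to $B$.
   Context: A tree is a set $B\subseteq E$ containing exactly one outgoing edge from every vertex other than the target $\mathsf t$; $y_B(v)$ is the cost of the path from $v$ to $\mathsf t$ in $B$; an edge $(u,v)$ is an improving switch with respect to $B$ if $c(u,v)+y_B(v)<y_B(u)$. The graph $G_{n,r,s,t}$. Let $[m]=\{1,\dots,m\}$ and $\epsilon=1/(rs)$. Vertices: a target $\mathsf t$ (also denoted $u_{n+1}$ and $w_{n+1}$), $u_i,w_i$ for $i\in[n]$, $a_{i,j,k}$ for $i\in[n],j\in[r],k\in[s]$, and $b_{i,j}$ for $i\in[n],j\in[rs]$. Edges (for all $i\in[n]$; ''$t$ copies'' means $t$ parallel edges indexed by $\ell\in[t]$): - $a^1_{i,j,k}:a_{i,j,k}\to a_{i,j,k+1}$, cost $0$ ($j\in[r],k\in[s-1]$); $a^1_{i,j,s}:a_{i,j,s}\to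 b_{i,1}$, cost $0$; - $a^{0,\ell}_{i,j,k}:a_{i,j,k}\to u_{i+1}$, cost $2^{2i+1}+(k-1)\epsilon$, $t$ copies ($j\in[r],k\in[s]$); - $b^1_{i,j}:b_{i,j}\to b_{i,j+1}$, cost $0$ ($j\in[rs-1]$); $b^1_{i,rs}:b_{i,rs}\to w_{i+1}$, cost $0$; - $b^{0,\ell}_{i,j}:b_{i,j}\to u_{i+1}$, cost $2^{2i+1}+1+(j-1)\epsilon$, $t$ copies ($j\in[rs]$); - $u^{1,\ell}_i:u_i\to b_{i,1}$, cost $0$, $t$ copies; $u^{0,\ell}_i:u_i\to u_{i+1}$, cost $2^{2i}$, $t$ copies; - $w^{j,\ell}_i:w_i\to a_{i,j,1}$, cost $0$, $t$ copies for each $j\in[r]$; $w^{0,\ell}_i:w_i\to w_{i+1}$, cost $2^{2i}$, $t$ copies. Edge groups: ${\bf a}^1_{i,j}=\{a^1_{i,j,k}:k\in[s]\}$, ${\bf a}^0_{i,j,k}=\{a^{0,\ell}_{i,j,k}:\ell\in[t]\}$, ${\bf b}^1_i=\{b^1_{i,j}:j\in[rs]\}$, ${\bf b}^0_{i,j}=\{b^{0,\ell}_{i,j}:\ell\in[t]\}$, ${\bf u}^1_i=\{u^{1,\ell}_i\}_\ell$, ${\bf u}^0_i=\{u^{0,\ell}_i\}_\ell$, ${\bf w}^j_i=\{w^{j,\ell}_i\}_\ell$ ($j\in[r]$), ${\bf w}^0_i=\{w^{0,\ell}_i\}_\ell$. The multi-edges are the sets ${\bf u}^1_i,{\bf u}^0_i,{\bf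 w}^0_i,{\bf b}^0_{i,j},{\bf a}^0_{i,j,k},{\bf w}^j_i$. A set $F\subseteq E$ is functional if it intersects every multi-edge. Write ${\bf a}^1_i\sqsubseteq F$ if ${\bf a}^1_{i,j}\subseteq F$ for some $j\in[r]$. Define $last({\bf b}^1_i,F)=\max(\{0\}\cup\{j\in[rs]:b^1_{i,j}\notin F\})$, $last({\bf a}^1_{i,j},F)=\max(\{0\}\cup\{k\in[s]:a^1_{i,j,k}\notin F\})$, and $reset(F)=\max(\{0\}\cup\{i\in[n]:{\bf b}^1_i\subseteq F\text{ and not }{\bf a}^1_i\sqsubseteq F\})$. For functional $F$, $\mathcal B_F\subseteq F$ consists exactly of the following edges: (i) for each $i>reset(F)$ with ${\bf b}^1_i\subseteq F$: all $b^1_{i,j}$ ($j\in[rs]$); for $j\in[r],k\in[s]$: $a^1_{i,j,k}$ if $k>last({\bf a}^1_{i,j},F)$, and ${\bf a}^0_{i,j,k}\cap F$ otherwise; ${\bf u}^1_i\cap F$; ${\bf w}^j_i\cap F$ for every $j$ with ${\bf a}^1_{i,j}\subseteq F$. (ii) for each $i>reset(F)$ with ${\bf b}^1_i\not\subseteq F$: for $j\in[rs]$: $b^1_{i,j}$ if $j>last({\bf b}^1_i,F)$, and ${\bf b}^0_{i,j}\cap F$ otherwise; ${\bf a}^0_{i,j,k}\cap F$ for all $j,k$; ${\bf u}^0_i\cap F$; ${\bf w}^0_i\cap F$. (iii) for $i=reset(F)$ (if $\ge1$): all $b^1_{i,j}$; for $j\in[r],k\in[s]$: $a^1_{i,j,k}$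 if $k>last({\bf a}^1_{i,j},F)$, and ${\bf a}^0_{i,j,k}\cap F$ otherwise; ${\bf u}^1_i\cap F$; ${\bf w}^0_i\cap F$. (iv) for each $i<reset(F)$: ${\bf b}^0_{i,j}\cap F$ for all $j\in[rs]$; ${\bf a}^0_{i,j,k}\cap F$ for all $j,k$; ${\bf u}^0_i\cap F$; ${\bf w}^j_i\cap F$ for all $j\in[r]$. *)

(* Defs.v *)
From HB Require Import structures.
From mathcomp Require Import all_boot all_order all_algebra.
Set Implicit Arguments. Unset Strict Implicit. Unset Printing Implicit Defensive.
Import Order.TTheory GRing.Theory Num.Theory.

(* Vertices: t, u_i, w_i, a_{i,j,k}, b_{i,j} (indices are 1-based naturals). *)
Inductive vertex : Type :=
| VT
| VU (i : nat)
| VW (i : nat)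
| VA (i j k : nat)
| VB (i j : nat).

(* Edges (ℓ = copy index of parallel edges).
   EA1 i j k   = a^1_{i,j,k}        EA0 i j k l = a^{0,l}_{i,j,k}
   EB1 i j     = b^1_{i,j}          EB0 i j l   = b^{0,l}_{i,j}
   EU1 i l     = u^{1,l}_i          EU0 i l     = u^{0,l}_i
   EW  i j l   = w^{j,l}_i (j in [r])   EW0 i l = w^{0,l}_i *)
Inductive edge : Type :=
| EA1 (i j k : nat)
| EA0 (i j k l : nat)
| EB1 (i j : nat)
| EB0 (i j l : nat)
| EU1 (i l : nat)
| EU0 (i l : nat)
| EW (i j l : nat)
| EW0 (i l : nat).

Section Graph.
Variables n r s t : nat.

Definition inr1 (m x : nat) : bool := (1 <= x <= m)%N.

Definition validV (v : vertex) : bool :=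
  match v with
  | VT => true
  | VU i | VW i => inr1 n i
  | VA i j k => [&& inr1 n i, inr1 r j & inr1 s k]
  | VB i j => inr1 n i && inr1 (r * s) j
  end.

Definition validE (e : edge) : bool :=
  match e with
  | EA1 i j k => [&& inr1 n i, inr1 r j & inr1 s k]
  | EA0 i j k l => [&& inr1 n i, inr1 r j, inr1 s k & inr1 t l]
  | EB1 i j => inr1 n i && inr1 (r * s) j
  | EB0 i j l => [&& inr1 n i, inr1 (r * s) j & inr1 t l]
  | EU1 i l | EU0 i l | EW0 i l => inr1 n i && inr1 t l
  | EW i j l => [&& inr1 n i, inr1 r j & inr1 t l]
  end.

Definition uN (i : nat) : vertex := if i == n.+1 then VT else VU i.
Definition wN (i : nat) : vertex := if i == n.+1 then VT else VW i.

Definition src (e : edge) : vertex :=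
  match e with
  | EA1 i j k | EA0 i j k _ => VA i j k
  | EB1 i j | EB0 i j _ => VB i j
  | EU1 i _ | EU0 i _ => VU i
  | EW i _ _ | EW0 i _ => VW i
  end.

Definition tgt (e : edge) : vertex :=
  match e with
  | EA1 i j k => if (k < s)%N then VA i j k.+1 else VB i 1
  | EA0 i _ _ _ => uN i.+1
  | EB1 i j => if (j < r * s)%N then VB i j.+1 else wN i.+1
  | EB0 i _ _ => uN i.+1
  | EU1 i _ => VB i 1
  | EU0 i _ => uN i.+1
  | EW i j _ => VA i j 1
  | EW0 i _ => wN i.+1
  end.

Local Open Scope ring_scope.

Definition eps : rat := 1 / (r * s)%:R.

Definition cost (e : edge) : rat :=
  match e with
  | EA1 _ _ _ => 0
  | EA0 i _ k _ => (2 ^ (2 * i + 1))%:R + (k - 1)%:R * eps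
  | EB1 _ _ => 0
  | EB0 i j _ => (2 ^ (2 * i + 1))%:R + 1 + (j - 1)%:R * eps
  | EU1 _ _ => 0
  | EU0 i _ => (2 ^ (2 * i))%:R
  | EW _ _ _ => 0
  | EW0 i _ => (2 ^ (2 * i))%:R
  end.

Definition is_tree (B : pred edge) : Prop :=
  (forall e, B e -> validE e) /\
  (forall v, validV v -> v <> VT -> exists! e, B e /\ src e = v).

Inductive pathcost (B : pred edge) : vertex -> rat -> Prop :=
| pc_t : pathcost B VT 0
| pc_step (e : edge) (y : rat) :
    B e -> src e <> VT -> pathcost B (tgt e) y -> pathcost B (src e) (cost e + y).

Definition improving (B : pred edge) (e : edge) : Prop :=
  exists yu yv, [/\ pathcost B (src e) yu, pathcost B (tgt e) yv & cost e + yv < yu].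

Local Close Scope ring_scope.

(* F is functional: F ⊆ E and F intersects every multi-edge. *)
Definition functional (F : pred edge) : Prop :=
  (forall e, F e -> validE e) /\
  (forall i, inr1 n i ->
     (exists l, inr1 t l /\ F (EU1 i l)) /\
     (exists l, inr1 t l /\ F (EU0 i l)) /\
     (exists l, inr1 t l /\ F (EW0 i l)) /\
     (forall j, inr1 (r * s) j -> exists l, inr1 t l /\ F (EB0 i j l)) /\
     (forall j k, inr1 r j -> inr1 s k -> exists l, inr1 t l /\ F (EA0 i j k l)) /\
     (forall j, inr1 r j -> exists l, inr1 t l /\ F (EW i j l))).

Variable F : pred edge.

Definition b1sub (i : nat) : bool := [forall j : 'I_(r * s), F (EB1 i j.+1)].
Definition a1sub (i j : nat) : bool := [forall k : 'I_s, F (EA1 i j k.+1)].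
Definition a1sq (i : nat) : bool := [exists j : 'I_r, a1sub i j.+1].

Definition lastB (i : nat) : nat :=
  \max_(j < (r * s).+1 | (0 < j)%N && ~~ F (EB1 i j)) j.
Definition lastA (i j : nat) : nat :=
  \max_(k < s.+1 | (0 < k)%N && ~~ F (EA1 i j k)) k.
Definition reset : nat :=
  \max_(i < n.+1 | [&& (0 < i)%N, b1sub i & ~~ a1sq i]) i.

Definition inBF (e : edge) : bool :=
  let R := reset in
  let cls i (c1 c2 c3 c4 : bool) :=
      if (R < i)%N then (if b1sub i then c1 else c2)
      else if i == R then c3 else c4 in
  F e &&
  match e with
  | EB1 i j => cls i true (lastB i < j)%N true false
  | EB0 i j _ => cls i false (j <= lastB i)%N false true
  | EA1 i j k => cls i (lastA i j < k)%N false (lastA i j < k)%N false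
  | EA0 i j k _ => cls i (k <= lastA i j)%N true (k <= lastA i j)%N true
  | EU1 i _ => cls i true false true false
  | EU0 i _ => cls i false true false true
  | EW i j _ => cls i (a1sub i j) false false true
  | EW0 i _ => cls i false true true false
  end.

End Graph.

(* Main.v *)
Require Import Defs.
From mathcomp Require Import all_boot all_order all_algebra.
From mathcomp Require Import zify ring lra.
Import Order.TTheory GRing.Theory Num.Theory.

Section H.
Variables (n r s t : nat) (F : pred edge) (B : pred edge).
Hypothesis HT : is_tree n r s t B.
Hypothesis HBF : forall e, B e -> inBF n r s F e.
Hypothesis rs_pos : (0 < r * s)%N.

Lemma edge_at v : validV n r s v -> v <> VT -> exists e, B e /\ src e = v.
Proof. move=> hv hn; case: HT => _ /(_ v hv hn) [e [[he hs] _]]; by exists e. Qed.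

Lemma reset_b1 : (0 < reset n r s F)%N -> b1sub r s F (reset n r s F).
Proof.
rewrite /reset; apply: (big_ind (fun x => 0 < x -> b1sub r s F x)%N) => //.
- move=> x y Hx Hy; rewrite /maxn; case: ifP => _; [exact Hy | exact Hx].
- by move=> i /and3P [_ hb _] _.
Qed.

Lemma lastB_le i j0 : (forall j, (j0 < j <= r*s)%N -> F (EB1 i j)) -> (lastB r s F i <= j0)%N.
Proof.
move=> H; rewrite /lastB; apply/bigmax_leqP => j /andP [j0p nF].
rewrite leqNgt; apply/negP => lt; move: nF; rewrite H //.
by rewrite lt -ltnS ltn_ord.
Qed.

Lemma lastA_le i j k0 : (forall k, (k0 < k <= s)%N -> F (EA1 i j k)) -> (lastA s F i j <= k0)%N.
Proof.
move=> H; rewrite /lastA; apply/bigmax_leqP => k /andP [k0p nF].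
rewrite leqNgt; apply/negP => lt; move: nF; rewrite H //.
by rewrite lt -ltnS ltn_ord.
Qed.

Lemma chainB i j0 Y : inr1 n i -> pathcost n r s B (wN n i.+1) Y ->
  (forall j l, (j0 < j <= r*s)%N -> ~~ B (EB0 i j l)) ->
  forall j, (j0 <= j <= r*s)%N -> pathcost n r s B (tgt n r s (EB1 i j)) Y.
Proof.
move=> hi hw hno.
have: forall d j, (r*s - j)%N = d -> (j0 <= j <= r*s)%N -> pathcost n r s B (tgt n r s (EB1 i j)) Y.
  elim=> [|d IH] j hd /andP[h0 h1].
  - have ->: j = r*s by lia. by rewrite /= ltnn.
  - have lt: (j < r*s)%N by lia.
    rewrite /= lt.
    have [e [he hs]] : exists e, B e /\ src e = VB i j.+1.
      by apply: edge_at => //=; rewrite hi /inr1 /=; lia.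
    case: e he hs => //= [a b|a b l] he [? ?]; subst a b.
    + have hs : src (EB1 i j.+1) <> VT by [].
      have := pc_step he hs  (IH j.+1 ltac:(lia) ltac:(apply/andP; split; lia)).
      by rewrite /= add0r.
    + by move: (hno j.+1 l); rewrite he => /(_ _) /negP; case; lia.
move=> H j hj; exact: (H _ j erefl hj).
Qed.


Lemma chainA i j k0 Y : inr1 n i -> inr1 r j -> pathcost n r s B (VB i 1) Y ->
  (forall k l, (k0 < k <= s)%N -> ~~ B (EA0 i j k l)) ->
  forall k, (k0 <= k <= s)%N -> pathcost n r s B (tgt n r s (EA1 i j k)) Y.
Proof.
move=> hi hj hw hno.
have: forall d k, (s - k)%N = d -> (k0 <= k <= s)%N -> pathcost n r s B (tgt n r s (EA1 i j k)) Y.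
  elim=> [|d IH] k hd /andP[h0 h1].
  - have ->: k = s by lia. by rewrite /= ltnn.
  - have lt: (k < s)%N by lia.
    rewrite /= lt.
    have [e [he hs]] : exists e, B e /\ src e = VA i j k.+1.
      by apply: edge_at => //=; rewrite hi hj /inr1 /=; lia.
    case: e he hs => //= [a b c|a b c l] he [? ? ?]; subst a b c.
    + have hs : src (EA1 i j k.+1) <> VT by [].
      have := pc_step he hs (IH k.+1 ltac:(lia) ltac:(apply/andP; split; lia)).
      by rewrite /= add0r.
    + by move: (hno k.+1 l); rewrite he => /(_ _) /negP; case; lia.
move=> H k hk; exact: (H _ k erefl hk).
Qed.

Lemma level m : (reset n r s F < m)%N -> (m <= n.+1)%N ->
  exists Y, pathcost n r s B (uN n m) Y /\ pathcost n r s B (wN n m) Y.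
Proof.
have: forall d m, (n.+1 - m)%N = d -> (reset n r s F < m)%N -> (m <= n.+1)%N ->
  exists Y, pathcost n r s B (uN n m) Y /\ pathcost n r s B (wN n m) Y.
  clear m; elim=> [|d IH] m hd hr hm.
  - have ->: m = n.+1 by lia.
    by exists 0%R; rewrite /uN /wN eqxx; split; constructor.
  - have [Y [hu hw]] := IH m.+1 ltac:(lia) ltac:(lia) ltac:(lia).
    have hmi : inr1 n m by rewrite /inr1; lia.
    have hmn : m != n.+1 by apply/eqP; lia.
    rewrite /uN /wN (negbTE hmn).
    have hs0 : (0 < s)%N by move: rs_pos; rewrite muln_gt0 => /andP[].
    case hb: (b1sub r s F m).
    + have hB0 : forall j l, (0 < j <= r*s)%N -> ~~ B (EB0 m j l).
        move=> j l _; apply/negP => /HBF; by rewrite /inBF /= hr hb andbF.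
      have hb1 := chainB m 0 Y hmi hw hB0 0 (leq0n _).
      rewrite /= rs_pos in hb1.
      exists Y; split.
      * have [e [he hs]] : exists e, B e /\ src e = VU m by apply: edge_at.
        case: e he hs => //= [a l|a l] he [?]; subst a.
        -- have hs : src (EU1 m l) <> VT by [].
           have := pc_step he hs hb1; by rewrite /= add0r.
        -- by move: he => /HBF; rewrite /inBF /= hr hb andbF.
      * have [e [he hs]] : exists e, B e /\ src e = VW m by apply: edge_at.
        case: e he hs => //= [a j l|a l] he [?]; subst a.
        -- have ha : a1sub s F m j by move: he => /HBF; rewrite /inBF /= hr hb => /andP[].
           have hj : inr1 r j by case: HT => /(_ _ he) /= /and3P[].
           have hA0 : forall k l, (0 < k <= s)%N -> ~~ B (EA0 m j k l).
             move=> k l' hk; apply/negP => /HBF; rewrite /inBF /= hr hb => /andP[_].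
             apply/negP; rewrite -ltnNge; apply: (leq_ltn_trans _ (proj1 (andP hk))).
             apply: lastA_le => k' hk'; have hks : (k'.-1 < s)%N by lia.
             move/forallP: ha => /(_ (Ordinal hks)) /=.
             by rewrite prednK //; lia.
           have ha1 := chainA m j 0 Y hmi hj hb1 hA0 0 (leq0n _).
           rewrite /= hs0 in ha1.
           have hs : src (EW m j l) <> VT by [].
           have := pc_step he hs ha1; by rewrite /= add0r.
        -- by move: he => /HBF; rewrite /inBF /= hr hb andbF.
    + exists ((2 ^ (2 * m))%:R + Y)%R; split.
      * have [e [he hs]] : exists e, B e /\ src e = VU m by apply: edge_at.
        case: e he hs => //= [a l|a l] he [?]; subst a.
        -- by move: he => /HBF; rewrite /inBF /= hr hb andbF.
        -- have hs : src (EU0 m l) <> VT by [].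
           exact: (pc_step he hs hu).
      * have [e [he hs]] : exists e, B e /\ src e = VW m by apply: edge_at.
        case: e he hs => //= [a j l|a l] he [?]; subst a.
        -- by move: he => /HBF; rewrite /inBF /= hr hb andbF.
        -- have hs : src (EW0 m l) <> VT by [].
           exact: (pc_step he hs hw).
move=> H; exact: (H _ m erefl).
Qed.

End H.

Theorem mainTheorem6 (n r s t : nat) (F : pred edge) :
  functional n r s t F ->
  (forall (i j : nat), inr1 n i -> inr1 (r * s) j ->
     ~~ F (EB1 i j) ->
     (forall j', (j < j' <= r * s)%N -> F (EB1 i j')) ->
     (reset n r s F <= i)%N ->
     forall B : pred edge, is_tree n r s t B ->
       (forall e, B e -> inBF n r s F e) ->
       improving n r s B (EB1 i j)) /\
  (forall (i j k : nat), inr1 n i -> inr1 r j -> inr1 s k ->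
     ~~ F (EA1 i j k) ->
     (forall k', (k < k' <= s)%N -> F (EA1 i j k')) ->
     (reset n r s F <= i)%N ->
     b1sub r s F i ->
     forall B : pred edge, is_tree n r s t B ->
       (forall e, B e -> inBF n r s F e) ->
       improving n r s B (EA1 i j k)).
Proof.
move=> _; split.
- move=> i j hi hj hnF hF' hR B HT HBF.
  have rs_pos : (0 < r * s)%N by move: hj; rewrite /inr1; lia.
  have hb : b1sub r s F i = false.
    apply/negP => /forallP; have hjs : (j.-1 < r * s)%N by move: hj; rewrite /inr1; lia.
    move=> /(_ (Ordinal hjs)) /=; rewrite prednK; last by move: hj; rewrite /inr1; lia.
    by rewrite (negbTE hnF).
  have hr : (reset n r s F < i)%N.
    rewrite ltn_neqAle hR andbT; apply/eqP => e.
    have hi0 : (0 < i)%N by move: hi; rewrite /inr1; lia.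
    by have := @reset_b1 n r s F; rewrite e hb => /(_ hi0).
  have [Y [hu hw]] := @level _ _ _ _ _ _ HT HBF rs_pos i.+1 (ltn_trans hr (ltnSn i)) ltac:(move: hi; rewrite /inr1; lia).
  have hB0 : forall j' l, (j < j' <= r*s)%N -> ~~ B (EB0 i j' l).
    move=> j' l hj'; apply/negP => /HBF; rewrite /inBF /= hr hb => /andP[_].
    apply/negP; rewrite -ltnNge; apply: (leq_ltn_trans _ (proj1 (andP hj'))).
    exact: lastB_le.
  have hv := @chainB _ _ _ _ _ HT rs_pos i j Y hi hw hB0 j ltac:(apply/andP; split => //; move: hj; rewrite /inr1; lia).
  have [e [he hs]] : exists e, B e /\ src e = VB i j.
    by apply: (@edge_at _ _ _ _ _ HT) => //=; rewrite hi.
  case: e he hs => //= [a b|a b l] he [? ?]; subst a b.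
  + by move: he => /HBF; rewrite /inBF (negbTE hnF).
  + have hs : src (EB0 i j l) <> VT by [].
    have hyu := pc_step he hs hu.
    exists (cost r s (EB0 i j l) + Y)%R, Y; split => //.
    rewrite /= add0r.
    have h1 : (0 <= (2 ^ (2 * i + 1))%:R :> rat)%R by rewrite ler0n.
    have h2 : (0 <= (j - 1)%:R * eps r s :> rat)%R.
      by rewrite mulr_ge0 // ?ler0n // /eps divr_ge0 // ler0n.
    lra.
- move=> i j k hi hj hk hnF hF' hR hb1 B HT HBF.
  have rs_pos : (0 < r * s)%N by rewrite muln_gt0; move: hj hk; rewrite /inr1; lia.
  have [Y [hu hw]] := @level _ _ _ _ _ _ HT HBF rs_pos i.+1 (leq_ltn_trans hR (ltnSn i)) ltac:(move: hi; rewrite /inr1; lia).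
  have hcase : forall e, inBF n r s F e -> F e && (match e with
     | EB0 i' _ _ => i' != i | EA0 i' j' k' _ => if i' == i then (k' <= lastA s F i' j')%N else true | _ => true end).
    move=> e he; move: (he); rewrite {1}/inBF => /andP[hF _]; rewrite hF /=.
    have key : forall a, a = i -> (reset n r s F < a)%N && b1sub r s F a || (a == reset n r s F).
      move=> a ->; have [hlt|hge] := ltnP (reset n r s F) i; first by rewrite hb1.
      by rewrite orbC (_ : i == reset n r s F) //; apply/eqP; lia.
    case: e he hF => //= [a b c l|a b l] + _.
    + case: (eqVneq a i) => [ea|] //; move: (key a ea); rewrite /inBF /=.
      case/orP => [/andP[-> ->]|/eqP ->]; first by case/andP.
      by rewrite ltnn eqxx; case/andP.
    + case: (eqVneq a i) => [ea|] //; move: (key a ea); rewrite /inBF /=.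
      case/orP => [/andP[-> ->]|/eqP ->]; first by case/andP.
      by rewrite ltnn eqxx; case/andP.
  have hB0 : forall j' l, (0 < j' <= r*s)%N -> ~~ B (EB0 i j' l).
    move=> j' l _; apply/negP => /HBF /hcase; by rewrite eqxx andbF.
  have hbv := @chainB _ _ _ _ _ HT rs_pos i 0 Y hi hw hB0 0 (leq0n _).
  rewrite /= rs_pos in hbv.
  have hA0 : forall k' l, (k < k' <= s)%N -> ~~ B (EA0 i j k' l).
    move=> k' l hk'; apply/negP => /HBF /hcase; rewrite eqxx => /andP[_].
    apply/negP; rewrite -ltnNge; apply: (leq_ltn_trans _ (proj1 (andP hk'))).
    exact: lastA_le.
  have hv := @chainA _ _ _ _ _ HT rs_pos i j k Y hi hj hbv hA0 k ltac:(apply/andP; split => //; move: hk; rewrite /inr1; lia).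
  have [e [he hs]] : exists e, B e /\ src e = VA i j k.
    by apply: (@edge_at _ _ _ _ _ HT) => //=; rewrite hi hj.
  case: e he hs => //= [a b c|a b c l] he [? ? ?]; subst a b c.
  + by move: he => /HBF; rewrite /inBF (negbTE hnF).
  + have hs : src (EA0 i j k l) <> VT by [].
    have hyu := pc_step he hs hu.
    exists (cost r s (EA0 i j k l) + Y)%R, Y; split => //.
    rewrite /= add0r.
    have h1 : (0 < (2 ^ (2 * i + 1))%:R :> rat)%R by rewrite ltr0n expn_gt0.
    have h2 : (0 <= (k - 1)%:R * eps r s :> rat)%R.
      by rewrite mulr_ge0 // ?ler0n // /eps divr_ge0 // ler0n.
    lra.
Qed.
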